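(* For all integers $n$ and $d$ with $3\leq d<\left\lceil\frac{n}{2}\right\rceil$, $$t(n,d)\geq n-d-3+\left\lceil\frac{n-1}{d}\right\rceil.$$
   Context: All graphs are finite, simple and undirected. In an edge-colored graph (adjacent edges may receive the same color), a path is a rainbow path if no two of its edges have the same color. A graph $G$ is $d$-rainbow connected if there is an edge-coloring of $G$ using $d$ colors such that every two distinct vertices of $G$ are joined by a rainbow path. For positive integers $n$ and $d$, $t(n,d)$ denotes the minimum number of edges of a $d$-rainbow connected graph on $n$ vertices. *)

(* Defs.v *)
From mathcomp Require Import all_boot.
Set Implicit Arguments. Unset Strict Implicit. Unset Printing Implicit Defensive.

Definition simple_graph (n : nat) (e : rel 'I_n) : Prop :=
  irreflexive e /\ symmetric e.

Definition num_edges (n : nat) (e : rel 'I_n) : nat :=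
  #|[set p : 'I_n * 'I_n | e p.1 p.2 && (p.1 < p.2)%N]|.

(* An edge-colouring with (at most) d colours: a colour for each unordered pair,
   i.e. a symmetric function; only its values on edges matter. *)
Definition edge_coloring (n d : nat) (c : 'I_n -> 'I_n -> 'I_d) : Prop :=
  forall x y, c x y = c y x.

Definition path_colors (n d : nat) (c : 'I_n -> 'I_n -> 'I_d) (x : 'I_n)
  (p : seq 'I_n) : seq 'I_d :=
  pairmap c x p.

Definition rainbow_path (n d : nat) (e : rel 'I_n) (c : 'I_n -> 'I_n -> 'I_d)
  (x y : 'I_n) (p : seq 'I_n) : bool :=
  [&& path e x p, last x p == y, uniq (x :: p) & uniq (path_colors c x p)].

Definition rainbow_connected (n d : nat) (e : rel 'I_n) : Prop :=
  exists c : 'I_n -> 'I_n -> 'I_d, edge_coloring c /\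
    forall x y : 'I_n, x != y -> exists p : seq 'I_n, rainbow_path e c x y p.

Definition ceil_div (a b : nat) : nat := (a + b.-1) %/ b.

(* Main.v *)
Require Import Defs.
From mathcomp Require Import all_boot zify.
From Stdlib Require Import ZArith Lia.
Set Implicit Arguments. Unset Strict Implicit. Unset Printing Implicit Defensive.
Open Scope Z_scope.
Lemma arithZ (n d m k q t: Z) :
  3 <= d -> m + d + 4 <= n + q -> q*d <= n + d - 2 ->
  n*d <= d*k + d*m - m -> k*k - 3*k <= 2*t -> t = m - n -> False.
Proof.
move=> H3 H1 H2 H4 H5 Ht.
have H6 : d*m + d*d + 4*d <= d*n + n + d - 2 by nia.
have H7 : d*d + 3*d + 2 + t <= d*k by nia.
have h : 0 <= (2*k - 3 - 2*d)*(2*k-3-2*d) by apply: Z.square_nonneg.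
have e : (2*k - 3 - 2*d)*(2*k-3-2*d) = 4*(k*k) - 12*k - 8*(d*k) + 9 + 12*d + 4*(d*d) by ring.
lia.
Qed.
Close Scope Z_scope.
Lemma arith (n d m K A k a e q : nat) :
  3 <= d -> 2*d+1 <= n -> d*n <= K + A -> A + m <= d*m -> K <= d*k ->
  n <= k + a -> k*k <= 2*e + k -> a + e = m -> q * d <= n - 1 + d.-1 ->
  n - d - 3 + q <= m.
Proof.
move=> H1 H2 H3 H4 H5 H6 H7 H8 H9.
rewrite leqNgt; apply/negP => Hc.
apply: (@arithZ (Z.of_nat n) (Z.of_nat d) (Z.of_nat m) (Z.of_nat k) (Z.of_nat q) (Z.of_nat m - Z.of_nat n)%Z); lia.
Qed.

Section Forest.
Variable n : nat.
Variable r : rel 'I_n.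
Hypothesis rsym : symmetric r.

Fixpoint near (z : 'I_n) (j : nat) (y : 'I_n) : bool :=
  if j is j'.+1 then near z j' y || [exists x, r y x && near z j' x] else y == z.

Lemma near_connect z j y : near z j y -> connect r y z.
Proof.
elim: j y => [|j IH] y /=; first by move/eqP->.
case/orP; first exact: IH.
case/existsP=> x /andP[ryx /IH]; apply: connect_trans; exact: connect1.
Qed.

Lemma connect_near z y : connect r y z -> exists j, near z j y.
Proof.
move=> /(@connectP _ r y z) [p pth ->]; elim: p y pth => [|x p IH] y /=.
  move=> _; exists 0%N; exact: eqxx.
case/andP=> ryx /IH [j Hj]; exists j.+1; apply/orP; right; apply/existsP; exists x.
by apply/andP; split.
Qed.

Let rt y := root r y.
Let csym := sym_connect_sym rsym.

Lemma ex_near y : exists j, near (rt y) j y.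
Proof. exact: connect_near (connect_root r y). Qed.

Definition dist y := ex_minn (ex_near y).
Lemma dist_near y : near (rt y) (dist y) y.
Proof. by rewrite /dist; case: ex_minnP. Qed.
Lemma dist_min y j : near (rt y) j y -> dist y <= j.
Proof. by rewrite /dist; case: ex_minnP => k _ H; apply: H. Qed.

Definition par y := odflt y [pick x | r y x && near (rt y) (dist y).-1 x].

Lemma par_spec y : rt y != y ->
  [/\ r y (par y), rt (par y) = rt y & dist (par y) < dist y].
Proof.
move=> Hy.
have Hn := dist_near y.
have Hm := @dist_min y.
move: Hn Hm; case Ed: (dist y) => [|j] /= Hn Hm.
  by move: Hy; rewrite (eqP Hn) /rt root_root // eqxx.
case/orP: Hn => [Hn|Hn]; first by have := Hm _ Hn; rewrite ltnn.
rewrite /par Ed /=.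
case: pickP => [x /andP[ryx nx]|H]; last first.
  by case/existsP: Hn => x Hx; move: (H x); rewrite Hx.
split => //.
  have cx := near_connect nx.
  by apply/eqP; rewrite /rt -(root_root csym y) root_connect.
have cx := near_connect nx.
have Ex : rt x = rt y by apply/eqP; rewrite /rt -(root_root csym y) root_connect.
by rewrite -Ex in nx; apply: dist_min nx.
Qed.

Lemma forest_count :
  n <= #|[set x | rt x == x]| + #|[set p : 'I_n * 'I_n | r p.1 p.2 && (p.1 < p.2)]|.
Proof.
set R := [set x | rt x == x].
set E := [set p : 'I_n * 'I_n | r p.1 p.2 && (p.1 < p.2)].
set f := fun x : 'I_n => if x < par x then (x, par x) else (par x, x).
have Hc : n = #|R| + #|~: R| by rewrite cardsC card_ord.
rewrite {1}Hc leq_add2l.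
have neq x : x \in ~: R -> x != par x.
  rewrite !inE => /par_spec [_ _ H]; apply/eqP => E1.
  by move: H; rewrite -E1 ltnn.
have inj : {in ~: R &, injective f}.
  move=> x y Hx Hy; rewrite /f.
  have key : par x = y -> par y = x -> False.
    move: (Hx) (Hy); rewrite !inE => /par_spec [_ _ H1] /par_spec [_ _ H2] E1 E2.
    by move: H1 H2; rewrite E1 E2 => H1 H2; have := ltn_trans H1 H2; rewrite ltnn.
  by case: ifP; case: ifP => _ _ [E1 E2] //; exfalso; apply: key.
rewrite -(card_in_imset inj); apply: subset_leq_card; apply/subsetP => p.
case/imsetP => x Hx ->; rewrite inE /f.
move: (Hx); rewrite !inE => /par_spec [rx _ _].
case: ifP => /= H; first by rewrite rx.
rewrite rsym rx /=.
have := neq x Hx; rewrite neq_ltn.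
by rewrite H.
Qed.
End Forest.

Section Cross.
Variables (n d : nat) (e : rel 'I_n) (c : 'I_n -> 'I_n -> 'I_d) (i : 'I_d).
Let ri := fun x y => e x y && (c x y != i).

Lemma path_ri y p : path e y p -> i \notin pairmap c y p -> path ri y p.
Proof.
elim: p y => [|x p IH] y //= /andP[eyx pth].
rewrite in_cons negb_or => /andP[H1 H2].
by rewrite /ri eyx eq_sym H1 /= IH.
Qed.

Lemma rainbow_cross x p : path e x p -> uniq (pairmap c x p) ->
  ~~ connect ri x (last x p) ->
  exists u w, [&& e u w, c u w == i, connect ri x u & connect ri w (last x p)].
Proof.
elim: p x => [|y p IH] x /=; first by rewrite connect0.
case/andP=> exy pth /andP[nin un] ncon.
case Ec: (c x y == i).
  exists x, y; rewrite exy Ec connect0 /=.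
  apply/connectP; exists p => //; apply: path_ri => //.
  by rewrite -(eqP Ec).
have rxy : ri x y by rewrite /ri exy Ec.
have ncon' : ~~ connect ri y (last y p).
  apply: contra ncon; apply: connect_trans; exact: connect1.
have [u [w /and4P[H1 H2 H3 H4]]] := IH y pth un ncon'.
exists u, w; rewrite H1 H2 H4 /= andbT.
by apply: connect_trans H3; apply: connect1.
Qed.
End Cross.

Lemma swap_count n (s : rel 'I_n) : irreflexive s -> symmetric s ->
  #|[set p : 'I_n * 'I_n | s p.1 p.2]| <= 2 * #|[set p : 'I_n * 'I_n | s p.1 p.2 && (p.1 < p.2)]|.
Proof.
move=> sirr ssym.
set L := [set p : 'I_n * 'I_n | s p.1 p.2 && (p.1 < p.2)].
apply: (@leq_trans #|L :|: [set (q.2, q.1) | q in L]|).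
  apply: subset_leq_card; apply/subsetP => q; rewrite !inE => sq.
  case: (ltngtP q.1 q.2) => H.
  - by rewrite sq.
  - rewrite andbF /=; apply/imsetP; exists (q.2, q.1); last by case: q {sq H}.
    by rewrite inE /= ssym sq H.
  - have E : q.1 = q.2 by apply: val_inj.
    by move: sq; rewrite E sirr.
rewrite mul2n -addnn; apply: leq_trans (leq_card_setU _ _) _.
by rewrite leq_add2l leq_imset_card.
Qed.

Lemma pairs_count n (R : {set 'I_n}) :
  #|R| * #|R| <= #|[set p : 'I_n * 'I_n | (p.1 \in R) && (p.2 \in R) && (p.1 != p.2)]| + #|R|.
Proof.
rewrite -cardsX.
set D := [set p : 'I_n * 'I_n | _].
apply: (@leq_trans #|D :|: [set (x, x) | x in R]|).
  apply: subset_leq_card; apply/subsetP => q; rewrite !inE => /andP[H1 H2].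
  rewrite H1 H2 /=; case: eqP => H //=.
  apply/imsetP; exists q.1 => //; by case: q H {H1 H2} => /= ? ? ->.
apply: leq_trans (leq_card_setU _ _) _.
by rewrite leq_add2l leq_imset_card.
Qed.

Theorem proposition2 (n d : nat) (e : rel 'I_n) :
  3 <= d -> d < ceil_div n 2 ->
  simple_graph e -> rainbow_connected d e ->
  n - d - 3 + ceil_div (n - 1) d <= num_edges e.
Proof.
move=> Hd Hdn [eirr esym] [c [csym Hrb]].
have Hn : 2*d+1 <= n by move: Hdn; rewrite /ceil_div /=; lia.
set m := num_edges e.
pose ri (i : 'I_d) := fun x y => e x y && (c x y != i).
have risym i : symmetric (ri i) by move=> x y; rewrite /ri esym csym.
pose k i := #|[set x | root (ri i) x == x]|.
pose a i := #|[set p : 'I_n * 'I_n | ri i p.1 p.2 && (p.1 < p.2)]|.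
pose ec i := #|[set p : 'I_n * 'I_n | (e p.1 p.2 && (c p.1 p.2 == i)) && (p.1 < p.2)]|.
have F1 i : n <= k i + a i by exact: forest_count (risym i).
have F2 i : a i + ec i = m.
  rewrite /a /ec /m /num_edges -(cardsID [set p : 'I_n * 'I_n | c p.1 p.2 == i] [set p : 'I_n * 'I_n | e p.1 p.2 && (p.1 < p.2)]) addnC.
  congr (_ + _); apply: eq_card => p; rewrite !inE /ri;
    by case: (e _ _); case: (c _ _ == i); case: (_ < _).
have F3 : \sum_(i < d) ec i = m.
  rewrite /m /num_edges -sum1_card (partition_big (fun p : 'I_n*'I_n => c p.1 p.2) predT) //=.
  apply: eq_bigr => i _; rewrite sum1dep_card /ec; apply: eq_card => p; rewrite !inE.
  by case: (e _ _); case: (c _ _ == i); case: (_ < _).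
have F4 i : k i * k i <= 2 * ec i + k i.
  set R := [set x | root (ri i) x == x].
  apply: leq_trans (pairs_count R) _; rewrite leq_add2r.
  set D := [set p : 'I_n * 'I_n | _].
  apply: (@leq_trans #|[set p : 'I_n*'I_n | e p.1 p.2 && (c p.1 p.2 == i)]|); last first.
    apply: (@swap_count n (fun x y => e x y && (c x y == i))).
      by move=> x; rewrite eirr.
    by move=> x y; rewrite esym csym.
  have csr := sym_connect_sym (risym i).
  pose g (p : 'I_n*'I_n) := odflt p [pick q : 'I_n * 'I_n | (e q.1 q.2 && (c q.1 q.2 == i)) && (root (ri i) q.1 == p.1) && (root (ri i) q.2 == p.2)].
  have Hg p : p \in D -> (e (g p).1 (g p).2 && (c (g p).1 (g p).2 == i)) && (root (ri i) (g p).1 == p.1) && (root (ri i) (g p).2 == p.2).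
    case: p => x y; rewrite !inE /= => /andP[/andP[Hx Hy] Hxy].
    rewrite /g; case: pickP => [q Hq|H] //; exfalso.
    have [p pth] := Hrb x y Hxy.
    case/and4P: pth => P1 P2 P3 P4.
    have nc : ~~ connect (ri i) x (last x p).
      by rewrite (eqP P2) -root_connect // (eqP Hx) (eqP Hy).
    have [u [w /and4P[H1 H2 H3 H4]]] := rainbow_cross P1 P4 nc.
    move: (H (u, w)); rewrite /= H1 H2 /=.
    have -> : root (ri i) u == x by rewrite -(eqP Hx) eq_sym root_connect.
    have -> : root (ri i) w == y.
      by rewrite -(eqP Hy) root_connect // -(eqP P2).
    by [].
  have inj : {in D &, injective g}.
    move=> p p' Hp Hp' E.
    have := Hg p Hp; have := Hg p' Hp'; rewrite E.
    move=> /andP[/andP[_ /eqP A1] /eqP A2] /andP[/andP[_ /eqP B1] /eqP B2].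
    by case: p p' A1 A2 B1 B2 {Hp Hp' E} => x y [x' y'] /= -> -> -> ->.
  rewrite -(card_in_imset inj); apply: subset_leq_card; apply/subsetP => q.
  case/imsetP => p Hp ->; rewrite inE.
  by case/andP: (Hg p Hp) => /andP[-> _].
have d0 : 0 < d by apply: leq_ltn_trans Hd.
pose i0 : 'I_d := Ordinal d0.
have [imax Hmax] : exists j, forall i, k i <= k j.
  by case: (@arg_maxnP _ i0 predT k) => //= j _ H; exists j => i; apply: H.
have F5 : \sum_(i < d) k i <= d * k imax.
  have -> : d * k imax = \sum_(i < d) k imax by rewrite sum_nat_const card_ord.
  apply: leq_sum => i _; exact: Hmax.
have F6 : d * n <= \sum_(i < d) k i + \sum_(i < d) a i.
  rewrite -big_split /=.
  have -> : d * n = \sum_(i < d) n by rewrite sum_nat_const card_ord.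
  apply: leq_sum => i _; exact: F1.
have F7 : \sum_(i < d) a i + m = d * m.
  have : \sum_(i < d) (a i + ec i) = d * m.
    by rewrite (eq_bigr (fun _ => m)) ?sum_nat_const ?card_ord // => i _; exact: F2.
  by rewrite big_split /= F3.
rewrite /ceil_div.
apply: (arith Hd Hn F6 _ F5 (F1 imax) (F4 imax) (F2 imax) (leq_divM _ _)).
by rewrite F7.
Qed.
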